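(* Let \[G=\langle a,b,c,s,t\mid sas^{-1}=ab,\ sbs^{-1}=b,\ scs^{-1}=c,\ tat^{-1}=ba,\ tbt^{-1}=b,\ tct^{-1}=c\rangle.\] Then: (1) $C_G(s)=\langle aba^{-1},b,c,s\rangle$; (2) $C_G(t)=\langle a^{-1}ba,b,c,t\rangle$; (3) $C_G(b)=\langle b,s,t\rangle$; (4) $C_G(c)=\langle c,s,t\rangle$; (5) $C_G(st^k)=\langle b,c,st^k\rangle$ for all $k\in\mathbb{Z}\setminus\{0\}$.
   Context: $C_G(g)$ denotes the centraliser of $g$ in $G$. The group $G$ is a semidirect product $F(a,b,c)\rtimes F(s,t)$. *)

(* Defs.v *)
(* Concrete model of
   G = < a,b,c,s,t | sas^-1=ab, sbs^-1=b, scs^-1=c, tat^-1=ba, tbt^-1=b, tct^-1=c >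
   as the semidirect product F(a,b,c) ⋊ F(s,t), free groups as reduced words. *)
From Stdlib Require Import List.
From mathcomp Require Import all_boot all_algebra.
Set Implicit Arguments. Unset Strict Implicit. Unset Printing Implicit Defensive.

Section FreeGroup.
Variable X : eqType.

(* a letter (x, false) is x, (x, true) is x^-1 *)
Definition letter := (X * bool)%type.
Definition linv (l : letter) : letter := (l.1, ~~ l.2).

Definition reduced (w : seq letter) : bool :=
  sorted (fun l m => m != linv l) w.

Definition push (l : letter) (w : seq letter) : seq letter :=
  match w with
  | m :: w' => if m == linv l then w' else l :: w
  | [::] => [:: l]
  end.

(* product of words u v, freely reduced (v assumed reduced) *)
Definition wmul (u v : seq letter) : seq letter := foldr push v u.
Definition winv (u : seq letter) : seq letter := rev (map linv u).

Lemma push_reduced l w : reduced w -> reduced (push l w).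
Proof.
case: w => [|m w] //= Hw.
case: ifP => Hm.
  by case: w Hw {Hm} => [|m' w] //= /andP [].
by rewrite /= Hm.
Qed.

Lemma wmul_reduced u v : reduced v -> reduced (wmul u v).
Proof. by move=> Hv; elim: u => [|l u IH] //=; apply: push_reduced. Qed.

Definition fgroup := {w : seq letter | reduced w}.

Definition fone : fgroup := exist _ [::] isT.
Definition fmul (x y : fgroup) : fgroup :=
  exist _ (wmul (sval x) (sval y)) (wmul_reduced (sval x) (proj2_sig y)).
Definition finv (x : fgroup) : fgroup :=
  exist _ (wmul (winv (sval x)) [::]) (wmul_reduced (winv (sval x)) (isT : reduced [::])).
Definition fgen (x : X) : fgroup := exist _ [:: (x, false)] isT.

End FreeGroup.

Definition fsubst (X Y : eqType) (f : X -> fgroup Y) (u : fgroup X) : fgroup Y :=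
  foldr (fun l acc => fmul (if l.2 then finv (f l.1) else f l.1) acc)
        (fone Y) (sval u).

(* generators of N = F(a,b,c): 0 = a, 1 = b, 2 = c ;
   generators of H = F(s,t):   0 = s, 1 = t *)
Definition N := fgroup 'I_3.
Definition H := fgroup 'I_2.

Definition na : N := fgen (@Ordinal 3 0 isT).
Definition nb : N := fgen (@Ordinal 3 1 isT).
Definition nc : N := fgen (@Ordinal 3 2 isT).

(* automorphisms of N given by conjugation by s, s^-1, t, t^-1 :
   phi_s : a |-> ab,     b |-> b, c |-> c
   phi_s^-1 : a |-> ab^-1
   phi_t : a |-> ba,     b |-> b, c |-> c
   phi_t^-1 : a |-> b^-1 a *)
Definition phi_letter (l : letter 'I_2) : N -> N :=
  fsubst (fun x : 'I_3 =>
    if nat_of_ord x == 0 then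
      match nat_of_ord l.1, l.2 with
      | 0, false => fmul na nb
      | 0, true  => fmul na (finv nb)
      | _, false => fmul nb na
      | _, true  => fmul (finv nb) na
      end
    else fgen x).

Definition phi (h : H) (n : N) : N := foldr phi_letter n (sval h).

Definition G := (N * H)%type.

Definition gone : G := (fone _, fone _).
Definition gmul (x y : G) : G := (fmul x.1 (phi x.2 y.1), fmul x.2 y.2).
Definition ginv (x : G) : G := (phi (finv x.2) (finv x.1), finv x.2).

Definition ga : G := (na, fone _).
Definition gb : G := (nb, fone _).
Definition gc : G := (nc, fone _).
Definition gs : G := (fone _, fgen (@Ordinal 2 0 isT)).
Definition gt : G := (fone _, fgen (@Ordinal 2 1 isT)).

Definition gexpz (g : G) (k : int) : G :=
  match k with
  | Posz n => iter n (gmul g) gone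
  | Negz n => iter n.+1 (gmul (ginv g)) gone
  end.

Definition in_gen (S : seq G) (g : G) : Prop :=
  exists w : seq (G * bool),
    (forall p, In p w -> In p.1 S) /\
    g = foldr (fun p acc => gmul (if p.2 then ginv p.1 else p.1) acc) gone w.

Definition centraliser (x : G) (g : G) : Prop := gmul g x = gmul x g.

(* Main.v *)
From Pilot Require Import Defs.
From mathcomp Require Import all_boot all_algebra zify.
Import Pilot.Defs.
Set Implicit Arguments. Unset Strict Implicit. Unset Printing Implicit Defensive.

Section FG.
Variable X : eqType.
Implicit Types (l m : letter X) (u v w : seq (letter X)) (x y z : fgroup X).

Lemma linvK l : linv (linv l) = l.
Proof. by case: l => a []. Qed.

Lemma linv_eq l m : (linv l == m) = (l == linv m).
Proof. by case: l m => a [] [b []]. Qed.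

Lemma linv_neq l : linv l != l.
Proof. by case: l => a [] /=; rewrite xpair_eqE eqxx /=. Qed.

Lemma fg_inj x y : sval x = sval y -> x = y.
Proof.
case: x y => u Hu [v Hv] /= E; subst v.
by rewrite (bool_irrelevance Hu Hv).
Qed.

Definition mk w (H : reduced w) : fgroup X := exist _ w H.

Lemma reduced_cons l w : reduced (l :: w) -> reduced w.
Proof. by case: w => //= m w /andP []. Qed.

Lemma reduced_cons_head l m w : reduced (l :: m :: w) -> m != linv l.
Proof. by case/andP. Qed.

Lemma reduced_catl u v : reduced (u ++ v) -> reduced u.
Proof. by case/cat_sorted2. Qed.

Lemma reduced_catr u v : reduced (u ++ v) -> reduced v.
Proof. by case/cat_sorted2. Qed.

Lemma push_cancel l w : reduced w -> push l (push (linv l) w) = w.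
Proof.
case: w => [|m w] /=; first by rewrite eqxx.
rewrite linvK; case: ifP => [/eqP -> | Hm].
  case: w => [|m' w] /=; first by [].
  move=> /andP [H1 _]. by rewrite (negbTE H1).
by rewrite /= eqxx.
Qed.

Lemma wmul_push l v t : reduced t -> wmul (push l v) t = push l (wmul v t).
Proof.
move=> Hz; case: v => [|m v] //=.
case: ifP => [/eqP -> | _] //=.
rewrite push_cancel //. exact: wmul_reduced.
Qed.

Lemma wmul_cat u u' v : wmul (u ++ u') v = wmul u (wmul u' v).
Proof. by rewrite /wmul foldr_cat. Qed.

Lemma wmulA u v t : reduced t -> wmul (wmul u v) t = wmul u (wmul v t).
Proof.
move=> Hz; elim: u => [|l u IH] //=.
by rewrite wmul_push ?IH //; apply: wmul_reduced.
Qed.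

Lemma wmul0 w : reduced w -> wmul w [::] = w.
Proof.
elim: w => [|l w IH] //= Hw.
rewrite IH; last exact: reduced_cons Hw.
case: w Hw {IH} => [|m w] //= /andP [H _].
by rewrite (negbTE H).
Qed.

Lemma wmul_catr u v : reduced (u ++ v) -> wmul u v = u ++ v.
Proof.
elim: u => [|l u IH] //= H.
rewrite IH; last exact: reduced_cons H.
case: (u ++ v) H => [|m w] //= /andP [Hm _].
by rewrite (negbTE Hm).
Qed.

Lemma winv_cons l w : winv (l :: w) = rcons (winv w) (linv l).
Proof. by rewrite /winv /= rev_cons. Qed.

Lemma wmul_inv_l u t : reduced u -> reduced t -> wmul (winv u) (wmul u t) = t.
Proof.
move=> Hu Hz; elim: u Hu => [|l u IH] //= Hu.
rewrite winv_cons -cats1 wmul_cat /=.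
have H := push_cancel (linv l) (wmul_reduced u Hz); rewrite linvK in H.
by rewrite H IH // (reduced_cons Hu).
Qed.

Lemma wmul_inv_r u t : reduced u -> reduced t -> wmul u (wmul (winv u) t) = t.
Proof.
move=> Hu Hz; elim: u Hu t Hz => [|l u IH] //= Hu t Hz.
rewrite winv_cons -cats1 wmul_cat /= IH.
- by rewrite push_cancel.
- exact: reduced_cons Hu.
- exact: push_reduced.
Qed.

Lemma winv_reduced w : reduced w -> reduced (winv w).
Proof.
rewrite /reduced /winv rev_sorted.
elim: w => [|l w IH] //= H.
have {}IH := IH (path_sorted H).
case: w H IH => [|m w] //= /andP [H1 _] H2.
by rewrite H2 andbT linvK eq_sym.
Qed.

Lemma finv_val x : sval (finv x) = winv (sval x).
Proof. rewrite /finv /= wmul0 //; apply: winv_reduced; exact: (proj2_sig x). Qed.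

Lemma fmulA x y z : fmul (fmul x y) z = fmul x (fmul y z).
Proof. apply: fg_inj => /=; apply: wmulA; exact: (proj2_sig z). Qed.

Lemma fmul1 x : fmul (fone X) x = x.
Proof. by apply: fg_inj. Qed.

Lemma fmul1r x : fmul x (fone X) = x.
Proof. apply: fg_inj => /=; apply: wmul0; exact: (proj2_sig x). Qed.

Lemma fmulVx x : fmul (finv x) x = fone X.
Proof.
apply: fg_inj => /=; rewrite wmul0; last exact: winv_reduced (proj2_sig x).
have := wmul_inv_l (proj2_sig x) (isT : reduced [::]).
by rewrite wmul0 //; exact: (proj2_sig x).
Qed.

Lemma fmulxV x : fmul x (finv x) = fone X.
Proof.
apply: fg_inj => /=; rewrite wmul0; last exact: winv_reduced (proj2_sig x).
have := wmul_inv_r (proj2_sig x) (isT : reduced [::]).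
rewrite wmul0 //. exact: winv_reduced (proj2_sig x).
Qed.

Lemma fmulK x y : fmul (finv x) (fmul x y) = y.
Proof. by rewrite -fmulA fmulVx fmul1. Qed.
Lemma fmulKV x y : fmul x (fmul (finv x) y) = y.
Proof. by rewrite -fmulA fmulxV fmul1. Qed.
Lemma fmulrK x y : fmul (fmul y x) (finv x) = y.
Proof. by rewrite fmulA fmulxV fmul1r. Qed.
Lemma fmulrKV x y : fmul (fmul y (finv x)) x = y.
Proof. by rewrite fmulA fmulVx fmul1r. Qed.

Lemma fmul_injl x y z : fmul x y = fmul x z -> y = z.
Proof. by move=> E; rewrite -(fmulK x y) E fmulK. Qed.
Lemma fmul_injr x y z : fmul y x = fmul z x -> y = z.
Proof. by move=> E; rewrite -(fmulrK x y) E fmulrK. Qed.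

Lemma finvK x : finv (finv x) = x.
Proof. by apply: (@fmul_injl (finv x)); rewrite fmulxV fmulVx. Qed.

Lemma finvM x y : finv (fmul x y) = fmul (finv y) (finv x).
Proof.
apply: (@fmul_injl (fmul x y)); rewrite fmulxV fmulA fmulKV fmulxV //.
Qed.

Lemma finv1 : finv (fone X) = fone X.
Proof. by apply: fg_inj. Qed.

Lemma finv_eq1 x : finv x = fone X -> x = fone X.
Proof. by move=> E; rewrite -(finvK x) E finv1. Qed.

Definition lelem l : fgroup X := if l.2 then finv (fgen l.1) else fgen l.1.

Lemma lelem_val l : sval (lelem l) = [:: l].
Proof. by case: l => a [] //=; rewrite /lelem /= finv_val. Qed.

Lemma split_cons x l w (Hw : reduced w) :
  sval x = l :: w -> x = fmul (lelem l) (mk Hw).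
Proof.
move=> H; apply: fg_inj => /=. rewrite lelem_val /= H.
have := proj2_sig x; rewrite H.
case: w {H Hw} => [|m w] //= /andP [Hm _]; by rewrite (negbTE Hm).
Qed.

Lemma mul_val x y : reduced (sval x ++ sval y) -> sval (fmul x y) = sval x ++ sval y.
Proof. exact: wmul_catr. Qed.

Lemma fg_ind (P : fgroup X -> Prop) :
  P (fone X) -> (forall l x, reduced (l :: sval x) -> P x -> P (fmul (lelem l) x)) ->
  forall x, P x.
Proof.
move=> P1 PS x.
move Hn: (size (sval x)) => n; elim: n x Hn => [|n IH] x Hn.
  by have -> : x = fone X by apply: fg_inj; case: (sval x) Hn.
case Ex: (sval x) Hn => [|l w] //= [Hn].
have Hw : reduced w by apply: (@reduced_cons l); rewrite -Ex; exact: (proj2_sig x).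
have Hlw : reduced (l :: w) by rewrite -Ex; exact: (proj2_sig x).
rewrite (split_cons Hw Ex); apply: PS => //.
by apply: IH.
Qed.

Definition fhom (Y : eqType) (f : fgroup X -> fgroup Y) :=
  forall x y, f (fmul x y) = fmul (f x) (f y).

End FG.

Section FG2.
Variable X : eqType.
Implicit Types (l m : letter X) (u v w : seq (letter X)) (x y z : fgroup X).

Lemma fmul_val x y : sval (fmul x y) = wmul (sval x) (sval y).
Proof. by []. Qed.

Lemma lelem_mul_val l x : reduced (l :: sval x) -> sval (fmul (lelem l) x) = l :: sval x.
Proof. by move=> H; rewrite mul_val lelem_val. Qed.

Lemma lelem_linv l : lelem (linv l) = finv (lelem l).
Proof. by case: l => a [] //=; rewrite /lelem /= finvK. Qed.

Section Hom.
Variable Y : eqType.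
Variable f : fgroup X -> fgroup Y.
Hypothesis fH : fhom f.

Lemma fhom1 : f (fone X) = fone Y.
Proof.
apply: (@fmul_injl _ (f (fone X))); rewrite -fH !fmul1r //.
Qed.

Lemma fhomV x : f (finv x) = finv (f x).
Proof.
apply: (@fmul_injl _ (f x)); rewrite -fH fmulxV fmulxV fhom1 //.
Qed.
End Hom.

Lemma fhom_eq (Y : eqType) (f1 f2 : fgroup X -> fgroup Y) :
  fhom f1 -> fhom f2 -> (forall g, f1 (fgen g) = f2 (fgen g)) -> forall x, f1 x = f2 x.
Proof.
move=> H1 H2 E; apply: fg_ind; first by rewrite (fhom1 H1) (fhom1 H2).
move=> l x _ IH; rewrite H1 H2 IH; congr fmul.
by case: l => g [] //; rewrite /lelem /= ?(fhomV H1) ?(fhomV H2) E.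
Qed.

Definition allQ (Q : pred X) x := all (fun l => Q l.1) (sval x).

Lemma fhom_fix (Q : pred X) (f : fgroup X -> fgroup X) :
  fhom f -> (forall g, Q g -> f (fgen g) = fgen g) -> forall x, allQ Q x -> f x = x.
Proof.
move=> H E; apply: fg_ind; first by rewrite (fhom1 H).
move=> l x Hr IH; rewrite /allQ lelem_mul_val //= => /andP [Ql Qx].
rewrite H IH //; congr fmul.
by case: l Ql {Hr} => g [] //= Qg; rewrite /lelem /= ?(fhomV H) E.
Qed.

Lemma allQ_wmul (Q : pred X) u v : all (fun l => Q l.1) u -> all (fun l => Q l.1) v ->
  all (fun l => Q l.1) (wmul u v).
Proof.
elim: u => [|l u IH] //= /andP [Ql Qu] Qv.
have := IH Qu Qv; case: (wmul u v) => [|m w] /=; first by rewrite Ql.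
case: ifP => _ /=; first by case/andP.
by move=> ->; rewrite Ql.
Qed.

Lemma allQ_mul Q x y : allQ Q x -> allQ Q y -> allQ Q (fmul x y).
Proof. exact: allQ_wmul. Qed.

Lemma allQ_inv Q x : allQ Q x -> allQ Q (finv x).
Proof.
rewrite /allQ finv_val /winv all_rev all_map. by apply: sub_all => -[].
Qed.

Lemma allQ_gen (Q : pred X) g : Q g -> allQ Q (fgen g).
Proof. by rewrite /allQ /= => ->. Qed.

Lemma allQ1 Q : allQ Q (fone X).
Proof. by []. Qed.

Definition fpow x n := iter n (fmul x) (fone X).

Lemma fpow_gen g n : sval (fpow (fgen g) n) = nseq n (g, false).
Proof.
elim: n => [|n IH] //=. rewrite /fpow /= IH.
by case: n {IH} => [|n] //=; rewrite xpair_eqE /= andbF.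
Qed.

Lemma fpow_geninv g n : sval (fpow (finv (fgen g)) n) = nseq n (g, true).
Proof.
elim: n => [|n IH] //=. rewrite /fpow /= IH.
by case: n {IH} => [|n] //=; rewrite xpair_eqE /= andbF.
Qed.

Lemma fpow_hom (Y : eqType) (f : fgroup X -> fgroup Y) x n : fhom f ->
  f (fpow x n) = iter n (fmul (f x)) (fone Y).
Proof.
move=> H; elim: n => [|n IH] /=; first exact: (fhom1 H).
by rewrite H -IH.
Qed.

Lemma rcons_const (a : letter X) s : a :: s = rcons s a -> s = nseq (size s) a.
Proof.
elim: s => [|b s IH] //= [<-] E.
by rewrite -{1}(IH E).
Qed.

Lemma reduced_nseq (a : letter X) n : reduced (nseq n a).
Proof.
elim: n => [|n IH] //=; case: n IH => [|n] //= ->; rewrite andbT.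
by rewrite ?linv_neq // eq_sym linv_neq.
Qed.

Lemma winv_size w : size (winv w) = size w.
Proof. by rewrite /winv size_rev size_map. Qed.

Lemma winvK w : winv (winv w) = w.
Proof. by rewrite /winv map_rev revK -map_comp map_id_in // => -[a b] _ /=; rewrite /linv /= negbK. Qed.

Lemma comm_list (l : letter X) (y : seq (letter X)) : winv (push (linv l) y) = push l (winv y) ->
  all (pred1 l) (winv y) || all (pred1 (linv l)) (winv y).
Proof.
case: y => [|m y] //=; rewrite linvK.
case: ifP => [/eqP -> | Hm].
- rewrite winv_cons; set w := winv y.
  case: w => [|a w] /=; first by rewrite eqxx orbT.
  case: ifP => [/eqP -> | _]; last first.
    by move/(f_equal size); rewrite /= size_rcons => /eqP; rewrite -addn2 -[X in X == _]addn0 eqn_add2l.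
  move=> E; have Hc := rcons_const E.
  apply/orP; right; rewrite all_rcons /= eqxx /= Hc.
  by apply/all_pred1P; rewrite size_nseq.
- rewrite winv_cons linvK winv_cons.
  case E0: (rcons (winv y) (linv m)) => [|a x] /=; first by case: (winv y) E0.
  case: ifP => [_ | Ha].
    by move/(f_equal size); rewrite /= size_rcons => /eqP; rewrite -[X in _ == X]addn0 -addn2 eqn_add2l.
  move=> [E1 E2]; subst a.
  apply/orP; left; rewrite /= eqxx /=.
  by rewrite (rcons_const (esym E2)); apply/all_pred1P; rewrite size_nseq.
Qed.

Lemma central_gen g x : fmul x (fgen g) = fmul (fgen g) x ->
  exists n, x = fpow (fgen g) n \/ x = fpow (finv (fgen g)) n.
Proof.
move=> E.
have E2 : finv (fmul (finv (fgen g)) (finv x)) = fmul (fgen g) x.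
  by rewrite finvM !finvK E.
have E3 : sval (finv (fmul (finv (fgen g)) (finv x))) = sval (fmul (fgen g) x) by rewrite E2.
rewrite finv_val !fmul_val !finv_val /= in E3.
have := @comm_list (g, false) (winv (sval x)).
rewrite winvK /= E3 => /(_ erefl) /orP [] /all_pred1P Hx; exists (size (sval x)).
- by left; apply: fg_inj; rewrite fpow_gen.
- by right; apply: fg_inj; rewrite fpow_geninv.
Qed.

End FG2.

Section Subst.
Variables X Y : eqType.
Variable f : X -> fgroup Y.
Definition img (l : letter X) := if l.2 then finv (f l.1) else f l.1.
Definition fsw (w : seq (letter X)) := foldr (fun l acc => fmul (img l) acc) (fone Y) w.

Lemma img_linv l : img (linv l) = finv (img l).
Proof. by case: l => a [] //=; rewrite /img /= finvK. Qed.

Lemma fsw_push l w : fsw (push l w) = fsw (l :: w).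
Proof.
case: w => [|m w] //=; case: ifP => [/eqP -> | _] //.
by rewrite img_linv fmulKV.
Qed.

Lemma fsw_wmul u v : fsw (wmul u v) = fmul (fsw u) (fsw v).
Proof.
elim: u => [|l u IH] /=; first by rewrite fmul1.
by rewrite fsw_push /= IH fmulA.
Qed.

Lemma fsubst_hom : fhom (fsubst f).
Proof. move=> x y; exact: fsw_wmul. Qed.

Lemma fsubst_gen g : fsubst f (fgen g) = f g.
Proof. by rewrite /fsubst /= fmul1r. Qed.
End Subst.

Lemma phi_letter_hom l : fhom (phi_letter l).
Proof. exact: fsubst_hom. Qed.

Lemma phi_hom h : fhom (phi h).
Proof.
rewrite /phi; elim: (sval h) => [|l w IH] x y //=.
by rewrite IH phi_letter_hom.
Qed.

Lemma comp_hom (X Y Z : eqType) (f : fgroup Y -> fgroup Z) (g : fgroup X -> fgroup Y) :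
  fhom f -> fhom g -> fhom (fun x => f (g x)).
Proof. by move=> Hf Hg x y; rewrite Hg Hf. Qed.

Lemma id_hom (X : eqType) : fhom (fun x : fgroup X => x).
Proof. by []. Qed.

Lemma phi_letter_cancel l n : phi_letter l (phi_letter (linv l) n) = n.
Proof.
apply: (@fhom_eq _ _ (fun n => phi_letter l (phi_letter (linv l) n)) (fun n => n)).
- by apply: comp_hom; apply: phi_letter_hom.
- exact: id_hom.
move=> x; apply: fg_inj; apply/eqP.
case: l => [[[|[|i]] Hi] b] //; case: x => [[|[|[|j]]] Hj] //; case: b; vm_compute; reflexivity.
Qed.

Lemma phi_push l w n : foldr phi_letter n (push l w) = phi_letter l (foldr phi_letter n w).
Proof.
case: w => [|m w] //=; case: ifP => [/eqP -> | _] //.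
by rewrite phi_letter_cancel.
Qed.

Lemma phiM h1 h2 n : phi (fmul h1 h2) n = phi h1 (phi h2 n).
Proof.
rewrite /phi /=; elim: (sval h1) => [|l u IH] //=.
by rewrite phi_push IH.
Qed.

Lemma phi1 n : phi (fone _) n = n.
Proof. by []. Qed.

Lemma phi_fone h : phi h (fone _) = fone _.
Proof. exact: fhom1 (phi_hom h). Qed.

Lemma phi_finv h n : phi h (finv n) = finv (phi h n).
Proof. exact: (fhomV (phi_hom h) n). Qed.

Lemma phi_mul h x y : phi h (fmul x y) = fmul (phi h x) (phi h y).
Proof. exact: phi_hom. Qed.

Lemma gmulA x y z : gmul (gmul x y) z = gmul x (gmul y z).
Proof.
case: x y z => [n1 h1] [n2 h2] [n3 h3]; rewrite /gmul /=.
by rewrite !fmulA phi_mul phiM.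
Qed.

Lemma gmul1 x : gmul gone x = x.
Proof. by case: x => n h; rewrite /gmul /= !fmul1. Qed.

Lemma gmul1r x : gmul x gone = x.
Proof. by case: x => n h; rewrite /gmul /= phi_fone !fmul1r. Qed.

Lemma gmulVx x : gmul (ginv x) x = gone.
Proof.
case: x => n h; rewrite /gmul /ginv /=.
by rewrite -phi_mul fmulVx phi_fone fmulVx.
Qed.

Lemma gmulxV x : gmul x (ginv x) = gone.
Proof.
case: x => n h; rewrite /gmul /ginv /=.
by rewrite -phiM fmulxV phi1 fmulxV.
Qed.

Lemma gmulK x y : gmul (ginv x) (gmul x y) = y.
Proof. by rewrite -gmulA gmulVx gmul1. Qed.
Lemma gmulKV x y : gmul x (gmul (ginv x) y) = y.
Proof. by rewrite -gmulA gmulxV gmul1. Qed.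

Lemma cent_mul x y z : centraliser x y -> centraliser x z -> centraliser x (gmul y z).
Proof. by rewrite /centraliser => Hy Hz; rewrite gmulA Hz -gmulA Hy gmulA. Qed.

Lemma cent_inv x y : centraliser x y -> centraliser x (ginv y).
Proof.
rewrite /centraliser => Hy.
apply: (can_inj (gmulK y)). 
by rewrite gmulKV -gmulA Hy gmulA gmulxV gmul1r.
Qed.

Lemma cent_one x : centraliser x gone.
Proof. by rewrite /centraliser gmul1 gmul1r. Qed.

Lemma in_gen_cent S x g : (forall y, List.In y S -> centraliser x y) -> in_gen S g -> centraliser x g.
Proof.
move=> HS [w [Hw ->]]; elim: w Hw => [|[y b] w IH] Hw /=; first exact: cent_one.
apply: cent_mul; last by apply: IH => p Hp; apply: Hw; right.
have Hy : centraliser x y by apply: HS (Hw (y, b) (or_introl erefl)).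
by case: b {Hw IH}; rewrite //; apply: cent_inv.
Qed.

Lemma in_gen1 S : in_gen S gone.
Proof. by exists [::]. Qed.

Lemma in_gen_gen S y : List.In y S -> in_gen S y.
Proof.
move=> Hy; exists [:: (y, false)]; split; last by rewrite /= gmul1r.
by move=> p [<- | []].
Qed.

Lemma in_gen_geninv S y : List.In y S -> in_gen S (ginv y).
Proof.
move=> Hy; exists [:: (y, true)]; split; last by rewrite /= gmul1r.
by move=> p [<- | []].
Qed.

Lemma in_gen_mul S y z : in_gen S y -> in_gen S z -> in_gen S (gmul y z).
Proof.
move=> [w1 [H1 E1]] [w2 [H2 E2]]; subst y z; exists (w1 ++ w2); split.
  by move=> p Hp; case: (List.in_app_or _ _ _ Hp) => ?; [apply: H1 | apply: H2].
elim: w1 {H1} => [|p w1 IH] /=; first by rewrite gmul1.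
by rewrite -IH gmulA.
Qed.

Lemma in_gen_inv S y : in_gen S y -> in_gen S (ginv y).
Proof.
move=> [w [Hw ->]]; elim: w Hw => [|[z b] w IH] Hw /=.
  by rewrite /ginv /= finv1 phi1 finv1; exact: in_gen1.
have -> : forall u v, ginv (gmul u v) = gmul (ginv v) (ginv u).
  move=> u v; apply: (can_inj (gmulK (gmul u v))).
  by rewrite gmulxV gmulA gmulKV gmulxV.
apply: in_gen_mul; first by apply: IH => p Hp; apply: Hw; right.
have Hz : List.In z S by apply: (Hw (z, b) (or_introl erefl)).
case: b {Hw IH} => /=.
  rewrite (_ : ginv (ginv z) = z); first exact: in_gen_gen.
  by apply: (can_inj (gmulK (ginv z))); rewrite gmulxV gmulVx.
exact: in_gen_geninv.
Qed.

Definition nA (g : 'I_3) : bool := nat_of_ord g != 0.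
Definition aletter (l : letter 'I_3) : bool := nat_of_ord l.1 == 0.
Definition afree (x : N) := allQ nA x.
Definition hdn (m : letter 'I_3) (w : seq (letter 'I_3)) : bool :=
  if w is m' :: _ then m' != m else true.

Lemma aletter_linv l : aletter (linv l) = aletter l.
Proof. by case: l. Qed.

Lemma reduced_consE (l : letter 'I_3) w : reduced (l :: w) = reduced w && hdn (linv l) w.
Proof. by case: w => [|m w] //=; rewrite andbC. Qed.

Lemma reduced_cat_a u l v : reduced u -> all (fun l => nA l.1) u -> aletter l ->
  reduced (l :: v) -> reduced (u ++ l :: v).
Proof.
elim: u => [|m u IH] Hu HHu Hl Hv //.
move: HHu => /= /andP [Hm Hu'].
have Hr := IH (reduced_cons Hu) Hu' Hl Hv.
change (reduced (m :: (u ++ l :: v))); rewrite reduced_consE Hr /=.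
case: u Hu Hu' {IH Hr} => [|m' u] /=.
  move=> _ _; apply/eqP => E; move: Hl; rewrite E aletter_linv /aletter.
  by move: Hm; rewrite /nA => /negbTE ->.
by case/andP.
Qed.

Lemma uniq_split u l r u' l' r' :
  all (fun l => nA l.1) u -> all (fun l => nA l.1) u' -> aletter l -> aletter l' ->
  u ++ l :: r = u' ++ l' :: r' -> [/\ u = u', l = l' & r = r'].
Proof.
elim: u u' => [|m u IH] [|m' u'] //=.
- by move=> _ _ _ _ [-> ->].
- by move=> _ /andP [Hm' _] Hl _ [E _]; move: Hm' Hl; rewrite /aletter /nA E => /negbTE ->.
- by move=> /andP [Hm _] _ _ Hl' [E _]; move: Hm Hl'; rewrite /aletter /nA E => /negbTE ->.
move=> /andP [_ Hu] /andP [_ Hu'] Hl Hl' [-> E].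
by case: (IH u' Hu Hu' Hl Hl' E) => -> -> ->.
Qed.

Lemma split_word (w : seq (letter 'I_3)) :
  all (fun l => nA l.1) w \/
  exists u l r, [/\ w = u ++ l :: r, all (fun l => nA l.1) u & aletter l].
Proof.
elim: w => [|m w IH]; first by left.
case Hm: (aletter m).
  by right; exists [::], m, w.
case: IH => [Hw | [u [l [r [E Hu Hl]]]]].
  by left; rewrite /= Hw andbT /nA; move: Hm; rewrite /aletter => ->.
right; exists (m :: u), l, r; split => //; first by rewrite E.
by rewrite /= Hu andbT /nA; move: Hm; rewrite /aletter => ->.
Qed.

Lemma split_elem (x : N) u l r : sval x = u ++ l :: r ->
  exists U R : N, [/\ sval U = u, sval R = r & x = fmul U (fmul (lelem l) R)].
Proof.
move=> E.
have Hx : reduced (u ++ l :: r) by rewrite -E; exact: (proj2_sig x).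
have Hu := reduced_catl Hx.
have Hlr := reduced_catr Hx.
have Hr := reduced_cons Hlr.
exists (mk Hu), (mk Hr); split => //.
apply: fg_inj; rewrite !fmul_val /= lelem_val /=.
have -> : push l r = l :: r.
  by case: r Hlr {Hr Hx E} => [|m r] //= /andP [Hm _]; rewrite (negbTE Hm).
by rewrite wmul_catr // E.
Qed.

Lemma afree_hdn (x : N) l : afree x -> aletter l -> hdn l (sval x).
Proof.
rewrite /afree /allQ; case: (sval x) => [|m w] //= /andP [Hm _] Hl.
by apply/eqP => E; move: Hm Hl; rewrite E /nA /aletter => /negbTE ->.
Qed.

Lemma afree_mul x y : afree x -> afree y -> afree (fmul x y).
Proof. exact: allQ_mul. Qed.
Lemma afree_inv x : afree x -> afree (finv x).
Proof. exact: allQ_inv. Qed.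

Section Psi.
Variable psi : N -> N.
Hypothesis psiH : fhom psi.
Hypothesis psi_fix : forall g, nA g -> psi (fgen g) = fgen g.
Variables beta gamma : N.
Hypothesis afb : afree beta.
Hypothesis afg : afree gamma.
Hypothesis psi_a : psi na = fmul beta (fmul na gamma).

Definition bl (l : letter 'I_3) := if l.2 then finv gamma else beta.
Definition gl (l : letter 'I_3) := if l.2 then finv beta else gamma.

Lemma afree_bl l : afree (bl l).
Proof. by rewrite /bl; case: l.2; rewrite ?afree_inv. Qed.
Lemma afree_gl l : afree (gl l).
Proof. by rewrite /gl; case: l.2; rewrite ?afree_inv. Qed.

Lemma bl_linv l : bl (linv l) = finv (gl l).
Proof. by case: l => g [] //=; rewrite /bl /gl /= finvK. Qed.

Lemma psi_afree x : afree x -> psi x = x.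
Proof. exact: fhom_fix. Qed.

Lemma lelem_a l : aletter l -> lelem l = if l.2 then finv na else na.
Proof.
case: l => [[[|g] Hg] b] //= _.
by rewrite /lelem /na /=; congr (if _ then finv (fgen _) else fgen _); apply: val_inj.
Qed.

Lemma psi_letter l : aletter l -> psi (lelem l) = fmul (bl l) (fmul (lelem l) (gl l)).
Proof.
move=> Hl; rewrite lelem_a // /bl /gl; case: l.2 => //.
by rewrite (fhomV psiH) psi_a !finvM !fmulA.
Qed.

Lemma D_gen (P x U R : N) l : afree P -> afree U -> aletter l ->
  sval x = sval U ++ l :: sval R ->
  hdn (linv l) (sval (fmul (gl l) (psi R))) ->
  sval (fmul P (psi x)) = sval (fmul P (fmul U (bl l))) ++ l :: sval (fmul (gl l) (psi R)).
Proof.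
move=> HP HU Hl Ex Hh.
have [U' [R' [E1 E2 E3]]] := split_elem Ex.
move: E3; have -> : U' = U by apply: fg_inj.
have -> : R' = R by apply: fg_inj.
move=> E3.
rewrite E3 !psiH psi_afree // psi_letter //.
set T := fmul (gl l) (psi R).
set C := fmul P (fmul U (bl l)).
have -> : fmul P (fmul U (fmul (fmul (bl l) (fmul (lelem l) (gl l))) (psi R))) =
          fmul C (fmul (lelem l) T) by rewrite /C /T !fmulA.
have HT : reduced (l :: sval T) by rewrite reduced_consE Hh andbT; exact: (proj2_sig T).
rewrite mul_val lelem_mul_val //.
apply: reduced_cat_a => //; first exact: (proj2_sig C).
by apply: afree_mul => //; apply: afree_mul => //; exact: afree_bl.
Qed.

Lemma S_head n (r : N) l : size (sval r) < n -> aletter l -> reduced (l :: sval r) ->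
  hdn (linv l) (sval (fmul (gl l) (psi r))).
Proof.
elim: n r l => [|n IH] r l // Hs Hl Hr.
case: (split_word (sval r)) => [Hw | [u [l' [r' [E Hu Hl']]]]].
  rewrite (psi_afree Hw); apply: (afree_hdn (x := fmul (gl l) r)); last by rewrite aletter_linv.
  by apply: afree_mul => //; exact: afree_gl.
have [U [R [EU ER _]]] := split_elem E.
rewrite -EU -ER in E.
have HU : afree U by rewrite /afree /allQ EU.
have HR : reduced (l' :: sval R).
  by have := proj2_sig r; rewrite /= E => /reduced_catr.
have Hh := IH R l' _ Hl' HR.
rewrite (D_gen (afree_gl l) HU Hl' E); last first.
  apply: Hh; move: Hs; rewrite E size_cat /= => Hs.
  by rewrite -ltnS (leq_trans _ Hs) // ltnS leq_addl.
set C := fmul (gl l) (fmul U (bl l')).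
have HC : afree C by apply: afree_mul; [exact: afree_gl | apply: afree_mul => //; exact: afree_bl].
case EC: (sval C) => [|c w] /=; last first.
  move: HC; rewrite /afree /allQ EC /= => /andP [Hc _].
  apply/eqP => Ec; move: Hc Hl; rewrite Ec /nA /aletter /= => /negbTE ->.
  by [].
apply/eqP => El.
have C1 : C = fone _ by apply: fg_inj.
have Hlinv : l' = linv l by [].
move: C1; rewrite /C Hlinv bl_linv => C1.
have U1 : U = fone _.
  apply: (@fmul_injl _ (gl l)); apply: (@fmul_injr _ (finv (gl l))).
  by rewrite fmul1r fmulxV fmulA.
by move: Hr; rewrite E U1 Hlinv /= eqxx.
Qed.

Lemma D_main (P x U R : N) l : afree P -> afree U -> aletter l ->
  sval x = sval U ++ l :: sval R ->
  sval (fmul P (psi x)) = sval (fmul P (fmul U (bl l))) ++ l :: sval (fmul (gl l) (psi R)).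
Proof.
move=> HP HU Hl Ex; apply: D_gen => //.
apply: (@S_head (size (sval R)).+1) => //.
by have := proj2_sig x; rewrite /= Ex => /reduced_catr.
Qed.

Lemma D_cmp (P x U R Y V R2 : N) l l2 : afree P -> afree U -> aletter l -> afree V -> aletter l2 ->
  sval x = sval U ++ l :: sval R -> sval Y = sval V ++ l2 :: sval R2 ->
  fmul P (psi x) = Y ->
  [/\ fmul P (fmul U (bl l)) = V, l = l2 & fmul (gl l) (psi R) = R2].
Proof.
move=> HP HU Hl HV Hl2 Ex EY E.
have := D_main HP HU Hl Ex; rewrite E EY => E2.
have HC : afree (fmul P (fmul U (bl l))).
  by apply: afree_mul => //; apply: afree_mul => //; exact: afree_bl.
case: (uniq_split HV HC Hl2 Hl E2) => E3 E4 E5.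
by split => //; apply: fg_inj.
Qed.

End Psi.

Definition sH : H := fgen (@Ordinal 2 0 isT).
Definition tH : H := fgen (@Ordinal 2 1 isT).
Definition ioN (n : N) : G := (n, fone _).
Definition ioH (h : H) : G := (fone _, h).

Lemma nb_neq1 : nb <> fone _. Proof. by move=> E; have := congr1 (fun z => sval z) E. Qed.
Lemma nbi_neq1 : finv nb <> fone _. Proof. by move=> E; have := congr1 (fun z => sval z) E. Qed.

Lemma ioN_mul x y : ioN (fmul x y) = gmul (ioN x) (ioN y).
Proof. by rewrite /ioN /gmul /= fmul1. Qed.
Lemma ioN_inv x : ioN (finv x) = ginv (ioN x).
Proof. by rewrite /ioN /ginv /= finv1. Qed.
Lemma ioH_mul x y : ioH (fmul x y) = gmul (ioH x) (ioH y).
Proof. by rewrite /ioH /gmul /= phi_fone fmul1. Qed.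
Lemma ioH_inv x : ioH (finv x) = ginv (ioH x).
Proof. by rewrite /ioH /ginv /= finv1 phi_fone. Qed.
Lemma pair_dec n h : (n, h) = gmul (ioN n) (ioH h).
Proof. by rewrite /gmul /= fmul1 fmul1r. Qed.

Lemma in_gen_iter S z n : in_gen S z -> in_gen S (iter n (gmul z) gone).
Proof. by move=> Hz; elim: n => [|n IH] /=; [exact: in_gen1 | exact: in_gen_mul]. Qed.

Lemma ioN_fpow z n : ioN (fpow z n) = iter n (gmul (ioN z)) gone.
Proof. by elim: n => [|n IH] //=; rewrite -IH -ioN_mul. Qed.
Lemma ioH_fpow z n : ioH (fpow z n) = iter n (gmul (ioH z)) gone.
Proof. by elim: n => [|n IH] //=; rewrite -IH -ioH_mul. Qed.

Lemma ord3_1 (g : 'I_3) : nat_of_ord g = 1 -> fgen g = nb.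
Proof. by move=> E; rewrite /nb; congr fgen; apply: val_inj. Qed.
Lemma ord3_2 (g : 'I_3) : nat_of_ord g = 2 -> fgen g = nc.
Proof. by move=> E; rewrite /nc; congr fgen; apply: val_inj. Qed.
Lemma ord2_0 (g : 'I_2) : nat_of_ord g = 0 -> fgen g = sH.
Proof. by move=> E; rewrite /sH; congr fgen; apply: val_inj. Qed.
Lemma ord2_1 (g : 'I_2) : nat_of_ord g = 1 -> fgen g = tH.
Proof. by move=> E; rewrite /tH; congr fgen; apply: val_inj. Qed.

Lemma in_gen_afree S x : List.In gb S -> List.In gc S -> afree x -> in_gen S (ioN x).
Proof.
move=> Hb Hc; move: x; apply: fg_ind; first by move=> _; exact: in_gen1.
move=> l x Hr IH; rewrite /afree /allQ lelem_mul_val //= => /andP [Hl Hx].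
rewrite ioN_mul; apply: in_gen_mul; last exact: IH.
case: l Hl {Hr} => [[[|[|[|g]]] Hg] b] //= _; rewrite /lelem /=.
- by rewrite ord3_1 //; case: b; [rewrite ioN_inv; exact: in_gen_geninv | exact: in_gen_gen].
- by rewrite ord3_2 //; case: b; [rewrite ioN_inv; exact: in_gen_geninv | exact: in_gen_gen].
Qed.

Lemma in_gen_H S h : List.In gs S -> List.In gt S -> in_gen S (ioH h).
Proof.
move=> Hs Ht; move: h; apply: fg_ind; first exact: in_gen1.
move=> l x Hr IH; rewrite ioH_mul; apply: in_gen_mul => //.
case: l {Hr} => [[[|[|g]] Hg] b] //=; rewrite /lelem /=.
- by rewrite ord2_0 //; case: b; [rewrite ioH_inv; exact: in_gen_geninv | exact: in_gen_gen].
- by rewrite ord2_1 //; case: b; [rewrite ioH_inv; exact: in_gen_geninv | exact: in_gen_gen].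
Qed.

Lemma fpow_comm (X : eqType) (z : fgroup X) n : fmul (fpow z n) z = fmul z (fpow z n).
Proof. elim: n => [|n IH] /=; first by rewrite fmul1 fmul1r. by rewrite fmulA IH. Qed.

Lemma conj_pow (X : eqType) (y z : fgroup X) n :
  fmul y (fmul (fpow z n) (finv y)) = fpow (fmul y (fmul z (finv y))) n.
Proof.
elim: n => [|n IH] /=; first by rewrite fmul1 fmulxV.
by rewrite -IH !fmulA fmulK.
Qed.

Lemma phi_fixg h (g : 'I_3) : nA g -> phi h (fgen g) = fgen g.
Proof.
move=> Hg; rewrite /phi; elim: (sval h) => [|l w IH] //=.
by rewrite IH /phi_letter fsubst_gen /= (negbTE Hg).
Qed.

Lemma phi_s_a : phi sH na = fmul (fone _) (fmul na nb).
Proof. by rewrite fmul1; apply: fg_inj; vm_compute. Qed.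
Lemma phi_t_a : phi tH na = fmul nb (fmul na (fone _)).
Proof. by rewrite fmul1r; apply: fg_inj; vm_compute. Qed.
Lemma phi_ti_a : phi (finv tH) na = fmul (finv nb) na.
Proof. by apply: fg_inj; vm_compute. Qed.

Lemma afree1 : afree (fone _). Proof. by []. Qed.
Lemma afree_nb : afree nb. Proof. by []. Qed.

Lemma mul_self_l (X : eqType) (a v : fgroup X) : fmul a v = v -> a = fone X.
Proof. by move=> E; apply: (@fmul_injr _ v); rewrite E fmul1. Qed.
Lemma mul_self_r (X : eqType) (a v : fgroup X) : fmul v a = v -> a = fone X.
Proof. by move=> E; apply: (@fmul_injl _ v); rewrite E fmul1r. Qed.

Definition L1 := [:: gmul (gmul ga gb) (ginv ga); gb; gc; gs].

Lemma gen1_eq : gmul (gmul ga gb) (ginv ga) = ioN (fmul na (fmul nb (finv na))).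
Proof. by rewrite !ioN_mul ioN_inv gmulA. Qed.

Lemma nb_comm V : fmul nb (fmul V (finv nb)) = V -> fmul V nb = fmul nb V.
Proof. by move=> F1; rewrite -{1}F1 fmulA fmulrKV. Qed.

Lemma nb_comm' V : fmul (finv nb) (fmul V nb) = V -> fmul V nb = fmul nb V.
Proof. by move=> F1; rewrite -{2}F1 fmulKV. Qed.

Lemma central_nb V : fmul V nb = fmul nb V ->
  exists m, V = fpow nb m \/ V = fpow (finv nb) m.
Proof. exact: (@central_gen _ (@Ordinal 3 1 isT)). Qed.

Lemma fixS n : forall x : N, size (sval x) < n -> phi sH x = x -> in_gen L1 (ioN x).
Proof.
elim: n => [|n IH] x Hs Hx //.
have psiH := phi_hom sH. have pfix := @phi_fixg sH.
case: (split_word (sval x)) => [Hw | [u [l [r [E Hu Hl]]]]].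
  by apply: in_gen_afree => //=; [right; left | right; right; left].
have [U [R [EU ER EX]]] := split_elem E.
rewrite -EU -ER in E.
have HU : afree U by rewrite /afree /allQ EU.
have Hx' : fmul (fone _) (phi sH x) = x by rewrite fmul1.
have [E1 _ E3] := D_cmp psiH pfix afree1 afree_nb phi_s_a afree1 HU Hl HU Hl E E Hx'.
move: Hl E E1 E3 EX; case: l => g [] Hl E; rewrite /bl /gl /= => E1 E3 EX.
  exfalso; apply: nbi_neq1; apply: (@mul_self_r _ _ U); by rewrite -{2}E1 fmul1.
case: (split_word (sval R)) => [HwR | [v [l' [r' [E' Hv Hl']]]]].
  exfalso; apply: nb_neq1; apply: (@mul_self_l _ _ R).
  by rewrite -{2}E3 (psi_afree psiH pfix HwR).
have [V [R' [EV ER' EXR]]] := split_elem E'.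
rewrite -EV -ER' in E'.
have HV : afree V by rewrite /afree /allQ EV.
have [F1 _ F3] := D_cmp psiH pfix afree1 afree_nb phi_s_a afree_nb HV Hl' HV Hl' E' E' E3.
move: Hl' E' F1 F3 EXR; case: l' => g' [] Hl' E'; rewrite /bl /gl /= => F1 F3 EXR; last first.
  exfalso; apply: nb_neq1; apply: (@mul_self_l _ _ V); by rewrite -{2}F1 fmul1r.
rewrite finv1 fmul1 in F3.
have HR' : size (sval R') < n.
  by move: Hs; rewrite E E' size_cat /= size_cat /=; lia.
have IHR := IH R' HR' F3.
rewrite EX EXR (lelem_a Hl) (lelem_a Hl') /=.
have -> : fmul U (fmul na (fmul V (fmul (finv na) R'))) =
          fmul U (fmul (fmul na (fmul V (finv na))) R') by rewrite !fmulA.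
rewrite ioN_mul; apply: in_gen_mul; first by apply: in_gen_afree => //=; [right; left | right; right; left].
rewrite ioN_mul; apply: in_gen_mul => //.
have [m [-> | ->]] := central_nb (nb_comm F1); rewrite conj_pow ioN_fpow; apply: in_gen_iter.
  by rewrite -gen1_eq; apply: in_gen_gen; left.
have -> : fmul na (fmul (finv nb) (finv na)) = finv (fmul na (fmul nb (finv na))).
  by rewrite !finvM finvK fmulA.
by rewrite ioN_inv -gen1_eq; apply: in_gen_geninv; left.
Qed.

Definition L2 := [:: gmul (gmul (ginv ga) gb) ga; gb; gc; gt].

Lemma gen2_eq : gmul (gmul (ginv ga) gb) ga = ioN (fmul (finv na) (fmul nb (finv (finv na)))).
Proof. by rewrite finvK !ioN_mul ioN_inv gmulA. Qed.

Lemma fixT n : forall x : N, size (sval x) < n -> phi tH x = x -> in_gen L2 (ioN x).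
Proof.
elim: n => [|n IH] x Hs Hx //.
have psiH := phi_hom tH. have pfix := @phi_fixg tH.
case: (split_word (sval x)) => [Hw | [u [l [r [E Hu Hl]]]]].
  by apply: in_gen_afree => //=; [right; left | right; right; left].
have [U [R [EU ER EX]]] := split_elem E.
rewrite -EU -ER in E.
have HU : afree U by rewrite /afree /allQ EU.
have Hx' : fmul (fone _) (phi tH x) = x by rewrite fmul1.
have [E1 _ E3] := D_cmp psiH pfix afree_nb afree1 phi_t_a afree1 HU Hl HU Hl E E Hx'.
move: Hl E E1 E3 EX; case: l => g [] Hl E; rewrite /bl /gl /= => E1 E3 EX; last first.
  exfalso; apply: nb_neq1; apply: (@mul_self_r _ _ U); by rewrite -{2}E1 fmul1.
case: (split_word (sval R)) => [HwR | [v [l' [r' [E' Hv Hl']]]]].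
  exfalso; apply: nbi_neq1; apply: (@mul_self_l _ _ R).
  by rewrite -{2}E3 (psi_afree psiH pfix HwR).
have [V [R' [EV ER' EXR]]] := split_elem E'.
rewrite -EV -ER' in E'.
have HV : afree V by rewrite /afree /allQ EV.
have [F1 _ F3] := D_cmp psiH pfix afree_nb afree1 phi_t_a (afree_inv afree_nb) HV Hl' HV Hl' E' E' E3.
move: Hl' E' F1 F3 EXR; case: l' => g' [] Hl' E'; rewrite /bl /gl /= => F1 F3 EXR.
  exfalso; apply: nbi_neq1; apply: (@mul_self_l _ _ V); by rewrite -{2}F1 finv1 fmul1r.
rewrite fmul1 in F3.
have HR' : size (sval R') < n.
  by move: Hs; rewrite E E' size_cat /= size_cat /=; lia.
have IHR := IH R' HR' F3.
rewrite EX EXR (lelem_a Hl) (lelem_a Hl') /=.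
have -> : fmul U (fmul (finv na) (fmul V (fmul na R'))) =
          fmul U (fmul (fmul (finv na) (fmul V (finv (finv na)))) R') by rewrite finvK !fmulA.
rewrite ioN_mul; apply: in_gen_mul; first by apply: in_gen_afree => //=; [right; left | right; right; left].
rewrite ioN_mul; apply: in_gen_mul => //.
have [m [-> | ->]] := central_nb (nb_comm' F1); rewrite conj_pow ioN_fpow; apply: in_gen_iter.
  by rewrite -gen2_eq; apply: in_gen_gen; left.
have -> : fmul (finv na) (fmul (finv nb) (finv (finv na))) =
          finv (fmul (finv na) (fmul nb (finv (finv na)))).
  by rewrite !finvM finvK fmulA.
by rewrite ioN_inv -gen2_eq; apply: in_gen_geninv; left.
Qed.

Lemma fix_afree (psi : N -> N) (psiH : fhom psi)
  (pfix : forall g, nA g -> psi (fgen g) = fgen g) beta gamma :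
  afree beta -> afree gamma -> psi na = fmul beta (fmul na gamma) ->
  beta <> fone _ -> finv gamma <> fone _ ->
  forall x, psi x = x -> afree x.
Proof.
move=> Hb Hg Ha Hb1 Hg1 x Hx.
case: (split_word (sval x)) => [Hw | [u [l [r [E Hu Hl]]]]]; first exact: Hw.
have [U [R [EU ER EX]]] := split_elem E.
rewrite -EU -ER in E.
have HU : afree U by rewrite /afree /allQ EU.
have Hx' : fmul (fone _) (psi x) = x by rewrite fmul1 Hx.
have [E1 _ _] := D_cmp psiH pfix Hb Hg Ha afree1 HU Hl HU Hl E E Hx'.
move: E1; rewrite fmul1 /bl; case: l.2 => E1; exfalso.
- by apply: Hg1; apply: (@mul_self_r _ _ U).
- by apply: Hb1; apply: (@mul_self_r _ _ U).
Qed.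

Definition tauk (k : int) : H :=
  match k with Posz n => fpow tH n | Negz n => fpow (finv tH) n.+1 end.
Definition Bk (k : int) : N :=
  match k with Posz n => fpow nb n | Negz n => fpow (finv nb) n.+1 end.
Definition sigma k := fmul sH (tauk k).

Lemma gexpz_gt k : gexpz gt k = ioH (tauk k).
Proof.
case: k => n; rewrite /tauk.
  exact: (esym (ioH_fpow tH n)).
by rewrite (ioH_fpow (finv tH) n.+1) ioH_inv.
Qed.

Lemma x_eq k : gmul gs (gexpz gt k) = ioH (sigma k).
Proof. by rewrite gexpz_gt /sigma ioH_mul. Qed.

Lemma phi_pow_a (z : H) (c : N) n : phi z na = fmul c na -> phi z c = c ->
  phi (fpow z n) na = fmul (fpow c n) na.
Proof.
move=> Ha Hc; elim: n => [|n IH] /=; first by rewrite fmul1.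
rewrite phiM IH phi_mul Ha (fpow_hom _ _ (phi_hom z)) Hc -fmulA.
by rewrite -[fmul (iter n _ _) c]/(fmul (fpow c n) c) fpow_comm.
Qed.

Lemma phi_tau_a k : phi (tauk k) na = fmul (Bk k) na.
Proof.
case: k => n; rewrite /tauk /Bk.
  apply: phi_pow_a; first by rewrite phi_t_a fmul1r.
  exact: (@phi_fixg tH (@Ordinal 3 1 isT)).
apply: phi_pow_a; first exact: phi_ti_a.
by rewrite phi_finv (@phi_fixg _ (@Ordinal 3 1 isT)).
Qed.

Lemma afree_fpow z n : afree z -> afree (fpow z n).
Proof. by move=> Hz; elim: n => [|n IH] //=; apply: afree_mul. Qed.

Lemma afree_Bk k : afree (Bk k).
Proof. by case: k => n; apply: afree_fpow => //; apply: afree_inv. Qed.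

Lemma Bk_neq1 k : k != 0%R -> Bk k <> fone _.
Proof.
case: k => [[|n]|n] // _ E; have := congr1 (fun z => sval z) E; rewrite /Bk /nb.
  by rewrite (fpow_gen (@Ordinal 3 1 isT) n.+1).
by rewrite (fpow_geninv (@Ordinal 3 1 isT) n.+1).
Qed.

Lemma phi_sigma_a k : phi (sigma k) na = fmul (Bk k) (fmul na nb).
Proof.
rewrite /sigma phiM phi_tau_a phi_mul phi_s_a fmul1.
by rewrite (psi_afree (phi_hom sH) (@phi_fixg sH) (afree_Bk k)).
Qed.

Lemma fixE k : k != 0%R -> forall x, phi (sigma k) x = x -> afree x.
Proof.
move=> Hk; apply: (fix_afree (phi_hom _) (@phi_fixg _) (afree_Bk k) afree_nb (phi_sigma_a k)).
- exact: Bk_neq1.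
- exact: nbi_neq1.
Qed.

Section Auto.
Variable k : int.
Definition fa (g : 'I_2) : H := if nat_of_ord g == 0 then fmul sH (finv (tauk k)) else fgen g.
Definition fb (g : 'I_2) : H := if nat_of_ord g == 0 then sigma k else fgen g.
Definition alpha := fsubst fa.
Definition betam := fsubst fb.

Lemma tau_fix (f : H -> H) : fhom f -> f tH = tH -> f (tauk k) = tauk k.
Proof.
move=> Hf Ht; case: k => n; rewrite /tauk (fpow_hom _ _ Hf) ?(fhomV Hf) Ht //.
Qed.

Lemma alpha_t : alpha tH = tH. Proof. by rewrite /alpha fsubst_gen. Qed.
Lemma betam_t : betam tH = tH. Proof. by rewrite /betam fsubst_gen. Qed.
Lemma alpha_s : alpha sH = fmul sH (finv (tauk k)). Proof. by rewrite /alpha fsubst_gen. Qed.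
Lemma betam_s : betam sH = sigma k. Proof. by rewrite /betam fsubst_gen. Qed.

Lemma alpha_sigma : alpha (sigma k) = sH.
Proof.
rewrite /sigma /alpha (fsubst_hom fa) -/alpha alpha_s (@tau_fix alpha (fsubst_hom fa) alpha_t).
by rewrite fmulrKV.
Qed.

Lemma betam_alpha h : betam (alpha h) = h.
Proof.
apply: (@fhom_eq _ _ (fun h => betam (alpha h)) (fun h => h)).
- exact: comp_hom (fsubst_hom _) (fsubst_hom _).
- exact: id_hom.
move=> [[|[|g]] Hg] //.
- rewrite (@ord2_0 (Ordinal Hg)) // alpha_s /betam (fsubst_hom fb) -/betam betam_s (@fhomV _ _ betam (fsubst_hom fb)).
  by rewrite (@tau_fix betam (fsubst_hom fb) betam_t) /sigma fmulrK.
- by rewrite (@ord2_1 (Ordinal Hg)) // alpha_t betam_t.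
Qed.

Lemma central_sigma h : fmul h (sigma k) = fmul (sigma k) h ->
  exists m, h = fpow (sigma k) m \/ h = fpow (finv (sigma k)) m.
Proof.
move=> E.
have E2 : fmul (alpha h) sH = fmul sH (alpha h).
  by rewrite -alpha_sigma /alpha -!(fsubst_hom fa) E.
have [m Hm] := @central_gen _ (@Ordinal 2 0 isT) _ E2.
exists m; rewrite -(betam_alpha h).
case: Hm => ->; [left | right]; rewrite (@fpow_hom _ _ betam _ _ (fsubst_hom fb)).
  by rewrite -/sH betam_s.
by rewrite (@fhomV _ _ betam (fsubst_hom fb)) -/sH betam_s.
Qed.
End Auto.

Lemma cent_ioH_inv (n : N) (h z : H) : centraliser (ioH z) (n, h) ->
  phi z n = n /\ fmul h z = fmul z h.
Proof.
rewrite /centraliser => E.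
have E1 := congr1 fst E; have E2 := congr1 snd E; rewrite /= in E1 E2; split => //.
by move: E1; rewrite phi_fone fmul1r fmul1.
Qed.

Lemma cent_ioN_inv (n z : N) (h : H) : phi h z = z -> centraliser (ioN z) (n, h) ->
  fmul n z = fmul z n.
Proof.
move=> Hz; rewrite /centraliser => E.
have E1 := congr1 fst E; rewrite /= in E1.
by move: E1; rewrite Hz.
Qed.

Lemma comm_NH n h : phi h n = n -> gmul (ioN n) (ioH h) = gmul (ioH h) (ioN n).
Proof.
move=> Hn; rewrite /gmul /ioN /ioH /=.
by rewrite phi_fone Hn fmul1 fmul1r fmul1r fmul1.
Qed.

Lemma cent_refl x : centraliser x x. Proof. by []. Qed.

Lemma in_gen_powN S z m : in_gen S (ioN z) -> in_gen S (ioN (fpow z m)).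
Proof. by move=> H; rewrite ioN_fpow; apply: in_gen_iter. Qed.
Lemma in_gen_powH S z m : in_gen S (ioH z) -> in_gen S (ioH (fpow z m)).
Proof. by move=> H; rewrite ioH_fpow; apply: in_gen_iter. Qed.

Lemma phi_nb h : phi h nb = nb. Proof. exact: (@phi_fixg h (@Ordinal 3 1 isT)). Qed.
Lemma phi_nc h : phi h nc = nc. Proof. exact: (@phi_fixg h (@Ordinal 3 2 isT)). Qed.

Lemma part1 g : centraliser gs g <-> in_gen [:: gmul (gmul ga gb) (ginv ga); gb; gc; gs] g.
Proof.
split.
- case: g => n h; change gs with (ioH sH) => /cent_ioH_inv [Hn Hh].
  rewrite pair_dec; apply: in_gen_mul.
    exact: (@fixS (size (sval n)).+1 n (ltnSn _) Hn).
  have [m [-> | ->]] := @central_gen _ (@Ordinal 2 0 isT) h Hh; apply: in_gen_powH.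
    by apply: in_gen_gen; right; right; right; left.
  by rewrite ioH_inv; apply: in_gen_geninv; right; right; right; left.
- apply: in_gen_cent => y [<- | [<- | [<- | [<- | []]]]].
  + rewrite /centraliser; apply: injective_projections; apply: fg_inj; vm_compute; reflexivity.
  + exact: (comm_NH (phi_nb sH)).
  + exact: (comm_NH (phi_nc sH)).
  + exact: cent_refl.
Qed.

Lemma part2 g : centraliser gt g <-> in_gen [:: gmul (gmul (ginv ga) gb) ga; gb; gc; gt] g.
Proof.
split.
- case: g => n h; change gt with (ioH tH) => /cent_ioH_inv [Hn Hh].
  rewrite pair_dec; apply: in_gen_mul.
    exact: (@fixT (size (sval n)).+1 n (ltnSn _) Hn).
  have [m [-> | ->]] := @central_gen _ (@Ordinal 2 1 isT) h Hh; apply: in_gen_powH.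
    by apply: in_gen_gen; right; right; right; left.
  by rewrite ioH_inv; apply: in_gen_geninv; right; right; right; left.
- apply: in_gen_cent => y [<- | [<- | [<- | [<- | []]]]].
  + rewrite /centraliser; apply: injective_projections; apply: fg_inj; vm_compute; reflexivity.
  + exact: (comm_NH (phi_nb tH)).
  + exact: (comm_NH (phi_nc tH)).
  + exact: cent_refl.
Qed.

Lemma part3 g : centraliser gb g <-> in_gen [:: gb; gs; gt] g.
Proof.
split.
- case: g => n h; change gb with (ioN nb) => /(cent_ioN_inv (phi_nb h)) Hn.
  rewrite pair_dec; apply: in_gen_mul; last by apply: in_gen_H; [right; left | right; right; left].
  have [m [-> | ->]] := central_nb Hn; apply: in_gen_powN.
    by apply: in_gen_gen; left.
  by rewrite ioN_inv; apply: in_gen_geninv; left.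
- apply: in_gen_cent => y [<- | [<- | [<- | []]]].
  + exact: cent_refl.
  + exact: (esym (comm_NH (phi_nb sH))).
  + exact: (esym (comm_NH (phi_nb tH))).
Qed.

Lemma part4 g : centraliser gc g <-> in_gen [:: gc; gs; gt] g.
Proof.
split.
- case: g => n h; change gc with (ioN nc) => /(cent_ioN_inv (phi_nc h)) Hn.
  rewrite pair_dec; apply: in_gen_mul; last by apply: in_gen_H; [right; left | right; right; left].
  have [m [-> | ->]] := @central_gen _ (@Ordinal 3 2 isT) n Hn; apply: in_gen_powN.
    by apply: in_gen_gen; left.
  by rewrite ioN_inv; apply: in_gen_geninv; left.
- apply: in_gen_cent => y [<- | [<- | [<- | []]]].
  + exact: cent_refl.
  + exact: (esym (comm_NH (phi_nc sH))).
  + exact: (esym (comm_NH (phi_nc tH))).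
Qed.

Lemma part5 (k : int) (g : G) : k != 0%R ->
  (centraliser (gmul gs (gexpz gt k)) g <-> in_gen [:: gb; gc; gmul gs (gexpz gt k)] g).
Proof.
move=> Hk; rewrite x_eq; split.
- case: g => n h => /cent_ioH_inv [Hn Hh].
  rewrite pair_dec; apply: in_gen_mul.
    by apply: in_gen_afree; [left | right; left | exact: (fixE Hk Hn)].
  have [m [-> | ->]] := central_sigma Hh; apply: in_gen_powH.
    by apply: in_gen_gen; right; right; left.
  by rewrite ioH_inv; apply: in_gen_geninv; right; right; left.
- apply: in_gen_cent => y [<- | [<- | [<- | []]]].
  + exact: (comm_NH (phi_nb _)).
  + exact: (comm_NH (phi_nc _)).
  + exact: cent_refl.
Qed.

Theorem lemma6p3 :
  (forall g : G, centraliser gs g <->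
     in_gen [:: gmul (gmul ga gb) (ginv ga); gb; gc; gs] g) /\
  (forall g : G, centraliser gt g <->
     in_gen [:: gmul (gmul (ginv ga) gb) ga; gb; gc; gt] g) /\
  (forall g : G, centraliser gb g <-> in_gen [:: gb; gs; gt] g) /\
  (forall g : G, centraliser gc g <-> in_gen [:: gc; gs; gt] g) /\
  (forall (k : int) (g : G), k != 0%R ->
     (centraliser (gmul gs (gexpz gt k)) g <->
      in_gen [:: gb; gc; gmul gs (gexpz gt k)] g)).
Proof.
split; first exact: part1.
split; first exact: part2.
split; first exact: part3.
split; first exact: part4.
exact: part5.
Qed.
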